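(* Setting. Fix integers $N,M,J\ge 1$, a time $t$, and dimensions $n_x,n_u,n,l$. The agent's predicted states obey $x_{t|t}=x_t$ (given) and $x_{k+1|t}=A_kx_{k|t}+B_ku_{k|t}+E_kw_{k|t}$ for $k=t,\dots,t+N-1$, with $x\in\mathbb{R}^{n_x}$, $u\in\mathbb{R}^{n_u}$, $w\in\mathbb{R}^{n_x}$. For $i=1,\dots,M$ the $i$-th obstacle's predicted states obey $o^i_{t|t}=o^i_t$ (given) and $o^i_{k+1|t}=T^i_ko^i_{k|t}+q^i_k+F^i_kn^i_{k|t}$; write $o_{k|t},n_{k|t}$ for the stacked vectors over $i$ and $T_k,F_k$ (block diagonal), $q_k$ (stacked) for the combined obstacle dynamics. Nominal obstacle states are $\bar o_{t|t}=o_t$, $\bar o_{k+1|t}=T_k\bar o_{k|t}+q_k$, with components $\bar o^i_{k|t}$. The inputs are given by the policy $$u_{k|t}=h_{k|t}+\sum_{l=t}^{k-1}M_{l,k|t}w_{l|t}+K_{k|t}(o_{k|t}-\bar o_{k|t}),\quad k=t,\dots,t+N-1,$$ with parameters $\boldsymbol\theta_t=(\{h_{k|t}\},\{M_{l,k|t}\},\{K_{k|t}\})$. Let $\bar x_{t|t}=x_t$, $\bar x_{k+1|t}=A_k\bar x_{k|t}+B_kh_{k|t}$ be the nominal (noise-free) agent trajectory. Let $\mathbf{w}_t=[w_{t|t}^\top\cdots w_{t+N-1|t}^\top]^\top$, $\mathbf{n}_t=[n_{t|t}^\top\cdots n_{t+N-1|t}^\top]^\top$, $\mathbf{v}_t=[w_{t|t}^\top\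 n_{t|t}^\top\cdots w_{t+N-1|t}^\top\ n_{t+N-1|t}^\top]^\top$, and let $\mathbf{P}$ be the permutation matrix with $[\mathbf{w}_t^\top\ \mathbf{n}_t^\top]^\top=\mathbf{P}\mathbf{v}_t$. Geometry and constraints: $\mathcal{K}\subset\mathbb{R}^l$ is a closed convex cone with non-empty interior and dual cone $\mathcal{K}^*$; $G,G^i\in\mathbb{R}^{l\times n}$, $g,g^i\in\mathbb{R}^l$; $R_k,R^i_k$ are given rotation matrices; $C\in\mathbb{R}^{n\times n_x}$, $c_t\in\mathbb{R}^n$; $F^x_j\in\mathbb{R}^{1\times n_x}$, $F^u_j\in\mathbb{R}^{1\times n_u}$, $f_j\in\mathbb{R}$ for $j=1,\dots,J$. Dual variables are $\lambda^i_{k|t},\nu^i_{k|t}\in\mathbb{R}^l$ for $k=t+1,\dots,t+N$, $i=1,\dots,M$. Say that the constraints (CA) and (XU) hold if (CA) for all $k\in\{t+1,\dots,t+N\}$, $i\in\{1,\dots,M\}$: $\lambda^i_{k|t},\nu^i_{k|t}\in\mathcal{K}^*$, $\|\lambda^{i\top}_{k|t}GR_k^\top\|_2\le1$, $\lambda^{i\top}_{k|t}GR_k^\top=-\nu^{i\top}_{k|t}G^iR_k^{i\top}$, and $\lambda^{i\top}_{k|t}\big(GR_k^\top(C(x_{k|t}-o^i_{k|t})+c_t)+g\big)<-\nu^{i\top}_{k|t}g^i$; (XU) for all $k\in\{t,\dots,t+N-1\}$, $j\in\{1,\dots,J\}$: $F^x_jx_{k+1|t}+F^u_ju_{k|t}\le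 f_j$. Define, for $k\in\{t,\dots,t+N\}$, $i$, $j$: $Y^i_{k|t}=-\lambda^{i\top}_{k|t}g-\nu^{i\top}_{k|t}g^i-\lambda^{i\top}_{k|t}GR_k^\top c_t-\lambda^{i\top}_{k|t}GR_k^\top C(\bar x_{k|t}-\bar o^i_{k|t})$; $Z^i_{k|t}$ the row vector such that $\lambda^{i\top}_{k|t}GR_k^\top C(x_{k|t}-o^i_{k|t})=\lambda^{i\top}_{k|t}GR_k^\top C(\bar x_{k|t}-\bar o^i_{k|t})+Z^i_{k|t}[\mathbf{w}_t^\top\ \mathbf{n}_t^\top]^\top$ for all noise values; $\bar Y^j_{k|t}=f_j-F^x_j\bar x_{k+1|t}-F^u_jh_{k|t}$; $\bar Z^j_{k|t}$ the row vector such that $F^x_jx_{k+1|t}+F^u_ju_{k|t}=F^x_j\bar x_{k+1|t}+F^u_jh_{k|t}+\bar Z^j_{k|t}[\mathbf{w}_t^\top\ \mathbf{n}_t^\top]^\top$ for all noise values. (These are affine in $\boldsymbol\theta_t$ for fixed duals, bilinear jointly.) Conclusions. 1) Let $\Gamma$ be non-singular, $\gamma>0$, $\mathbf{\Gamma}=I_N\otimes\Gamma$. Then for given $(\boldsymbol\theta_t,\{\lambda^i_{k|t}\},\{\nu^i_{k|t}\})$, (CA) and (XU) hold for every $\mathbf{v}_t$ with $\|\mathbf{\Gamma}\mathbf{v}_t\|_\infty\le\gamma$ (i.e. each $[w_{k|t}^\top\ n_{k|t}^\top]^\top\in\{d\mid\|\Gamma d\|_\infty\le\gamma\}$) if and only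 if for all $k\in\{t,\dots,t+N-1\}$, $i$, $j$: $\lambda^i_{k+1|t},\nu^i_{k+1|t}\in\mathcal{K}^*$, $\|\lambda^{i\top}_{k+1|t}GR_{k+1}^\top\|_2\le1$, $\lambda^{i\top}_{k+1|t}GR_{k+1}^\top=-\nu^{i\top}_{k+1|t}G^iR^{i\top}_{k+1}$, $Y^i_{k+1|t}>\gamma\|Z^i_{k+1|t}\mathbf{P}\mathbf{\Gamma}^{-1}\|_1$, and $\bar Y^j_{k|t}-\gamma\|\bar Z^j_{k|t}\mathbf{P}\mathbf{\Gamma}^{-1}\|_1\ge0$. 2) Let $\Sigma$ be a covariance matrix, $\mathbf{\Sigma}=I_N\otimes\Sigma$, $\epsilon\in(0,1)$, and suppose $\mathbf{v}_t\sim\mathcal{N}(0,\mathbf{\Sigma})$ (i.e. the $[w_{k|t}^\top\ n_{k|t}^\top]^\top$ are i.i.d. $\mathcal{N}(0,\Sigma)$). Set $\gamma_{ca}=\Phi^{-1}(1-\frac{\epsilon}{2NM})$, $\gamma_{xu}=\Phi^{-1}(1-\frac{\epsilon}{2NJ})$, where $\Phi^{-1}$ is the quantile function of the standard normal distribution. If for all $k\in\{t,\dots,t+N-1\}$, $i$, $j$: $\lambda^i_{k+1|t},\nu^i_{k+1|t}\in\mathcal{K}^*$, $\|\lambda^{i\top}_{k+1|t}GR_{k+1}^\top\|_2\le1$, $\lambda^{i\top}_{k+1|t}GR_{k+1}^\top=-\nu^{i\top}_{k+1|t}G^iR^{i\top}_{k+1}$, $Y^i_{k+1|t}>\gamma_{ca}\|Z^i_{k+1|t}\mathbf{P}\mathbf{\Sigma}^{1/2}\|_2$,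 and $\bar Y^j_{k|t}\ge\gamma_{xu}\|\bar Z^j_{k|t}\mathbf{P}\mathbf{\Sigma}^{1/2}\|_2$, then the probability that (CA) and (XU) both hold is at least $1-\epsilon$. 3) With $\mathbf{\Sigma}$, $\epsilon$ as in 2) but with $\gamma_{ca}=\sqrt{\frac{2NM-\epsilon}{\epsilon}}$, $\gamma_{xu}=\sqrt{\frac{2NJ-\epsilon}{\epsilon}}$: if the same conditions as in 2) hold, then for every probability distribution of $\mathbf{v}_t$ with $\mathbb{E}(\mathbf{v}_t)=0$ and $\mathbb{E}(\mathbf{v}_t\mathbf{v}_t^\top)=\mathbf{\Sigma}$, the probability that (CA) and (XU) both hold is at least $1-\epsilon$.
   Context: $\mathcal{K}^*=\{y\mid y^\top x\ge0\ \forall x\in\mathcal{K}\}$. $\mathbf{\Sigma}^{1/2}$ denotes the symmetric positive semidefinite square root. $\otimes$ is the Kronecker product. Here $\lambda^i_{k|t},\nu^i_{k|t}$ and the policy parameters are deterministic decision variables (not depending on the noise), while $x_{k|t},u_{k|t},o_{k|t}$ are the closed-loop predicted quantities, which are affine functions of the noise vector $\mathbf{v}_t$. In the paper, the sets described in parts 1), 2)–3) are called $\mathcal{F}_t(\mathbf{D1})$, $\mathcal{F}_t(\mathbf{D2})$, $\mathcal{F}_t(\mathbf{D3})$ (the latter two being inner-approximations of the chance-constrained feasible sets). *)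

(* Defs.v *)
From HB Require Import structures.
From mathcomp Require Import all_boot all_order all_algebra.
From mathcomp Require Import all_classical all_reals all_analysis.
Set Implicit Arguments.
Unset Strict Implicit.
Unset Printing Implicit Defensive.
Import Order.TTheory GRing.Theory Num.Theory.
Import numFieldNormedType.Exports.
Local Open Scope classical_set_scope.
Local Open Scope ring_scope.

Section Defs.
Variable R : realType.

(* inverse of the row-major index map  (i, j) |-> i * n + j  used by mxvec *)
Definition unidx {m n : nat} (k : 'I_(m * n)) : 'I_m * 'I_n :=
  enum_val (cast_ord (esym (mxvec_cast m n)) k).

(* Kronecker product A (x) B, with the row-major block indexing of mxvec *)
Definition kron {m1 n1 m2 n2 : nat} (A : 'M[R]_(m1, n1)) (B : 'M[R]_(m2, n2))
  : 'M[R]_(m1 * m2, n1 * n2) :=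
  \matrix_(i, j) (A (unidx i).1 (unidx j).1 * B (unidx i).2 (unidx j).2).

(* vertical stacking [f 0; f 1; ...; f (m-1)] of m column vectors *)
Definition stack {m p : nat} (f : 'I_m -> 'cV[R]_p) : 'cV[R]_(m * p) :=
  (mxvec (\matrix_(i < m) (f i)^T))^T.

(* the i-th block of size p of a stacked column vector (inverse of stack) *)
Definition block {m p : nat} (v : 'cV[R]_(m * p)) (i : 'I_m) : 'cV[R]_p :=
  (row i (vec_mx v^T))^T.

Definition norm1 {m : nat} (r : 'rV[R]_m) : R := \sum_j `|r 0 j|.
Definition norm2 {m : nat} (r : 'rV[R]_m) : R := Num.sqrt (\sum_j r 0 j ^+ 2).
Definition norminf {m : nat} (c : 'cV[R]_m) : R := \big[Num.max/0]_i `|c i 0|.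

Definition sym_psd {m : nat} (S : 'M[R]_m) : Prop :=
  S^T = S /\ forall x : 'cV[R]_m, 0 <= (x^T *m S *m x) 0 0.

Definition rotation {m : nat} (Q : 'M[R]_m) : Prop :=
  Q^T *m Q = 1%:M /\ \det Q = 1.

Definition proper_cone {m : nat} (K : set 'cV[R]_m) : Prop :=
  closed K /\ K !=set0 /\
  (forall x, K x -> forall a : R, 0 <= a -> K (a *: x)) /\
  (forall x y, K x -> K y -> forall a : R, 0 <= a <= 1 -> K ((1 - a) *: x + a *: y)) /\
  interior K !=set0.

Definition dual_cone {m : nat} (K : set 'cV[R]_m) : set 'cV[R]_m :=
  [set y | forall x, K x -> 0 <= (y^T *m x) 0 0].

Definition Phi (x : R) : R := fine (normal_prob (0:R) 1 [set y | y <= x]).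

(* CDF at r of N(0, s^2) for s >= 0 (s = 0 : point mass at 0) *)
Definition gauss_cdf (s r : R) : R :=
  if 0 < s then Phi (r / s) else (if 0 <= r then 1 else 0).

Variables (nx nu nn M : nat).

(* agent and obstacle dynamics, indexed by absolute time k *)
Record dynamics := Dynamics {
  A : nat -> 'M[R]_nx;
  B : nat -> 'M[R]_(nx, nu);
  E : nat -> 'M[R]_nx;
  T : nat -> 'I_M -> 'M[R]_nx;
  q : nat -> 'I_M -> 'cV[R]_nx;
  F : nat -> 'I_M -> 'M[R]_(nx, nn);
  xt : 'cV[R]_nx;
  ot : 'I_M -> 'cV[R]_nx
}.

(* policy parameters theta_t, indexed by absolute times *)
Record policy := Policy {
  h : nat -> 'cV[R]_nu;
  Mg : nat -> nat -> 'M[R]_(nu, nx);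
  Kg : nat -> 'M[R]_(nu, M * nx)
}.

Variables (N : nat) (t : nat) (sys : dynamics) (th : policy).

Definition D := (nx + M * nn)%N.   (* dimension of [w_{k|t}; n_{k|t}] *)

(* v_t = [w_{t|t}; n_{t|t}; ...; w_{t+N-1|t}; n_{t+N-1|t}] ; relative step s *)
Definition vstep (v : 'cV[R]_(N * D)) (s : nat) : 'cV[R]_D :=
  \col_j (if (insub s : option 'I_N) is Some k then v (mxvec_index k j) 0 else 0).

Definition wn (v : 'cV[R]_(N * D)) (s : nat) : 'cV[R]_nx := usubmx (vstep v s).
Definition nstack (v : 'cV[R]_(N * D)) (s : nat) : 'cV[R]_(M * nn) :=
  dsubmx (vstep v s).
Definition nobs (v : 'cV[R]_(N * D)) (s : nat) (i : 'I_M) : 'cV[R]_nn :=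
  block (nstack v s) i.

Definition wn_all (v : 'cV[R]_(N * D)) : 'cV[R]_(N * nx + N * (M * nn)) :=
  col_mx (stack (fun s : 'I_N => wn v s)) (stack (fun s : 'I_N => nstack v s)).

Fixpoint obs (v : 'cV[R]_(N * D)) (s : nat) (i : 'I_M) : 'cV[R]_nx :=
  match s with
  | 0 => ot sys i
  | s'.+1 => T sys (t + s') i *m obs v s' i + q sys (t + s') i
             + F sys (t + s') i *m nobs v s' i
  end.

Fixpoint obsbar (s : nat) (i : 'I_M) : 'cV[R]_nx :=
  match s with
  | 0 => ot sys i
  | s'.+1 => T sys (t + s') i *m obsbar s' i + q sys (t + s') i
  end.

Definition u (v : 'cV[R]_(N * D)) (s : nat) : 'cV[R]_nu :=
  h th (t + s) + \sum_(l < s) Mg th (t + l) (t + s) *m wn v l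
  + Kg th (t + s) *m (stack (fun i => obs v s i) - stack (fun i => obsbar s i)).

Fixpoint x (v : 'cV[R]_(N * D)) (s : nat) : 'cV[R]_nx :=
  match s with
  | 0 => xt sys
  | s'.+1 => A sys (t + s') *m x v s' + B sys (t + s') *m u v s'
             + E sys (t + s') *m wn v s'
  end.

Fixpoint xbar (s : nat) : 'cV[R]_nx :=
  match s with
  | 0 => xt sys
  | s'.+1 => A sys (t + s') *m xbar s' + B sys (t + s') *m h th (t + s')
  end.

Variables (n l J : nat).
Record geometry := Geometry {
  K : set 'cV[R]_l;
  G : 'M[R]_(l, n);
  g : 'cV[R]_l;
  Gi : 'I_M -> 'M[R]_(l, n);
  gi : 'I_M -> 'cV[R]_l;
  Rk : nat -> 'M[R]_n;
  Rik : nat -> 'I_M -> 'M[R]_n;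
  C : 'M[R]_(n, nx);
  ct : 'cV[R]_n;
  Fx : 'I_J -> 'rV[R]_nx;
  Fu : 'I_J -> 'rV[R]_nu;
  f : 'I_J -> R
}.

Variables (geo : geometry) (lam nud : nat -> 'I_M -> 'cV[R]_l). (* absolute k *)

(* structural (noise-independent) dual constraints at absolute time k *)
Definition dual_ok (k : nat) (i : 'I_M) : Prop :=
  dual_cone (K geo) (lam k i) /\ dual_cone (K geo) (nud k i) /\
  norm2 ((lam k i)^T *m G geo *m (Rk geo k)^T) <= 1 /\
  (lam k i)^T *m G geo *m (Rk geo k)^T = - ((nud k i)^T *m Gi geo i *m (Rik geo k i)^T).

Definition CA (v : 'cV[R]_(N * D)) : Prop :=
  forall (s : 'I_N) (i : 'I_M),
    dual_ok (t + s.+1) i /\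
    ((lam (t + s.+1) i)^T *m (G geo *m (Rk geo (t + s.+1))^T
        *m (C geo *m (x v s.+1 - obs v s.+1 i) + ct geo) + g geo)) 0 0
    < - ((nud (t + s.+1) i)^T *m gi geo i) 0 0.

Definition XU (v : 'cV[R]_(N * D)) : Prop :=
  forall (s : 'I_N) (j : 'I_J),
    (Fx geo j *m x v s.+1 + Fu geo j *m u v s) 0 0 <= f geo j.

Definition Y (s : nat) (i : 'I_M) : R :=
  let k := (t + s)%N in
  - ((lam k i)^T *m g geo) 0 0 - ((nud k i)^T *m gi geo i) 0 0
  - ((lam k i)^T *m G geo *m (Rk geo k)^T *m ct geo) 0 0
  - ((lam k i)^T *m G geo *m (Rk geo k)^T *m C geo *m (xbar s - obsbar s i)) 0 0.

Definition Ybar (s : nat) (j : 'I_J) : R :=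
  f geo j - (Fx geo j *m xbar s.+1) 0 0 - (Fu geo j *m h th (t + s)) 0 0.

Definition is_Z (s : nat) (i : 'I_M) (Z : 'rV[R]_(N * nx + N * (M * nn))) : Prop :=
  let k := (t + s)%N in
  forall v : 'cV[R]_(N * D),
    (lam k i)^T *m G geo *m (Rk geo k)^T *m C geo *m (x v s - obs v s i)
    = (lam k i)^T *m G geo *m (Rk geo k)^T *m C geo *m (xbar s - obsbar s i)
      + Z *m wn_all v.

Definition is_Zbar (s : nat) (j : 'I_J) (Z : 'rV[R]_(N * nx + N * (M * nn))) : Prop :=
  forall v : 'cV[R]_(N * D),
    Fx geo j *m x v s.+1 + Fu geo j *m u v s
    = Fx geo j *m xbar s.+1 + Fu geo j *m h th (t + s) + Z *m wn_all v.

End Defs.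

(* Main.v *)
Require Import Defs.
From HB Require Import structures.
From mathcomp Require Import all_boot all_order all_algebra.
From mathcomp Require Import all_classical all_reals all_analysis.
From mathcomp Require Import ring lra.
From mathcomp Require Import measurable_realfun measurable_fun_approximation.
Import Order.TTheory GRing.Theory Num.Theory.
Import numFieldNormedType.Exports.
Local Open Scope classical_set_scope.
Local Open Scope ring_scope.
Set Implicit Arguments.
Unset Strict Implicit.
Unset Printing Implicit Defensive.
Lemma unidxK (m n : nat) (i : 'I_m) (j : 'I_n) : unidx (mxvec_index i j) = (i, j).
Proof. by rewrite /unidx /mxvec_index cast_ordK enum_rankK. Qed.

Lemma unidx_inj (m n : nat) : injective (@unidx m n).
Proof. by move=> a b /enum_val_inj /cast_ord_inj. Qed.

Lemma kron1_mul (R : realType) (N D : nat) (A B : 'M[R]_D) :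
  kron (1%:M : 'M[R]_N) A *m kron (1%:M : 'M[R]_N) B = kron (1%:M : 'M[R]_N) (A *m B).
Proof.
apply/matrixP => p q; rewrite !mxE.
rewrite (reindex (uncurry (@mxvec_index N D))) /=; last first.
  by exists (@unidx N D) => [[i j] _|k _] /=; [rewrite unidxK|case/mxvec_indexP: k => i j; rewrite unidxK].
rewrite (_ : \sum_(x : 'I_N * 'I_D) _ = \sum_(i < N) \sum_(j < D)
   kron 1%:M A p (mxvec_index i j) * kron 1%:M B (mxvec_index i j) q); last first.
  by rewrite pair_bigA; apply: eq_bigr => -[i j] _.
rewrite (bigD1 (unidx p).1) //=.
rewrite [X in _ + X]big1 => [|k1 nk]; last first.
  by rewrite big1 // => k2 _; rewrite !mxE unidxK /= eq_sym (negbTE nk) mul0r mul0r.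
rewrite addr0 big_distrr /=; apply: eq_bigr => k2 _.
rewrite !mxE !unidxK /= eqxx mul1r; ring.
Qed.

Lemma kron11 (R : realType) (N D : nat) :
  kron (1%:M : 'M[R]_N) (1%:M : 'M[R]_D) = 1%:M.
Proof.
apply/matrixP => p q; rewrite !mxE -natrM -(inj_eq (@unidx_inj N D)).
by case: (unidx p) => a b; case: (unidx q) => c e; rewrite xpair_eqE; case: (a == c); case: (b == e).
Qed.

Lemma kron_unit (R : realType) (N D : nat) (A : 'M[R]_D) :
  A \in unitmx -> kron (1%:M : 'M[R]_N) A \in unitmx.
Proof.
move=> uA; have h : kron (1%:M : 'M[R]_N) A *m kron 1%:M (invmx A) = 1%:M.
  by rewrite kron1_mul mulmxV // kron11.
by case: (mulmx1_unit h).
Qed.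
Lemma norminf_le (R : realType) m (d : 'cV[R]_m) gam :
  norminf d <= gam -> forall j, `|d j 0| <= gam.
Proof.
move=> h j; apply: le_trans h; rewrite /norminf (bigD1 j) //=.
by rewrite le_max lexx.
Qed.

Lemma le_norminf (R : realType) m (d : 'cV[R]_m) gam :
  0 <= gam -> (forall j, `|d j 0| <= gam) -> norminf d <= gam.
Proof.
move=> g0 h; rewrite /norminf; elim/big_ind: _ => //.
by move=> a b ha hb; rewrite ge_max ha hb.
Qed.

Lemma mul_le_norm1 (R : realType) m (c : 'rV[R]_m) (d : 'cV[R]_m) gam :
  norminf d <= gam -> (c *m d) 0 0 <= gam * norm1 c.
Proof.
move=> h; rewrite mxE /norm1 mulr_sumr; apply: ler_sum => j _.
apply: le_trans (ler_norm _) _; rewrite normrM mulrC.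
by apply: ler_wpM2r => //; apply: norminf_le.
Qed.

Lemma norm1_attained (R : realType) m (c : 'rV[R]_m) gam : 0 <= gam ->
  exists d : 'cV[R]_m, norminf d <= gam /\ (c *m d) 0 0 = gam * norm1 c.
Proof.
move=> g0; exists (\col_j (if 0 <= c 0 j then gam else - gam)); split.
  by apply: le_norminf => // j; rewrite mxE; case: ifP => _; rewrite ?normrN ger0_norm.
rewrite mxE /norm1 mulr_sumr; apply: eq_bigr => j _; rewrite mxE.
case: ifPn => hc; first by rewrite ger0_norm // mulrC.
by rewrite ltr0_norm ?ltNge // mulrN mulrC mulrN.
Qed.

Lemma norm2E (R : realType) m (r : 'rV[R]_m) : norm2 r = Num.sqrt ((r *m r^T) 0 0).
Proof. by rewrite /norm2 mxE; congr Num.sqrt; apply: eq_bigr => j _; rewrite mxE expr2. Qed.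

Lemma expand3 (R : realType) (l n nx : nat) (a : 'cV[R]_l) (G0 : 'M[R]_(l, n))
  (R0 : 'M[R]_n) (C0 : 'M[R]_(n, nx)) (d : 'cV[R]_nx) (c : 'cV[R]_n) (g0 : 'cV[R]_l) :
  a^T *m (G0 *m R0 *m (C0 *m d + c) + g0) =
  a^T *m G0 *m R0 *m C0 *m d + a^T *m G0 *m R0 *m c + a^T *m g0.
Proof. by rewrite !mulmxDr !mulmxA. Qed.

Lemma CA_iff (R : realType) (nx nu nn M N J n l t : nat)
  (sys : dynamics R nx nu nn M) (th : policy R nx nu M)
  (geo : geometry R nx nu M n l J) (lam nud : nat -> 'I_M -> 'cV[R]_l)
  (P : 'M[R]_(N * nx + N * (M * nn), N * D nx nn M))
  (HP : forall v : 'cV[R]_(N * D nx nn M), wn_all v = P *m v)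
  (Z : nat -> 'I_M -> 'rV[R]_(N * nx + N * (M * nn)))
  (HZ : forall (s : 'I_N) (i : 'I_M), is_Z t sys th geo lam s.+1 i (Z s.+1 i))
  (v : 'cV[R]_(N * D nx nn M)) :
  (forall (s : 'I_N) (i : 'I_M), dual_ok geo lam nud (t + s.+1) i) ->
  (CA t sys th geo lam nud v <->
   forall (s : 'I_N) (i : 'I_M), (Z s.+1 i *m P *m v) 0 0 < Y t sys th geo lam nud s.+1 i).
Proof.
move=> hd.
have key : forall (s : 'I_N) (i : 'I_M),
  ((lam (t + s.+1) i)^T *m (G geo *m (Rk geo (t + s.+1))^T
        *m (C geo *m (x t sys th v s.+1 - obs t sys v s.+1 i) + ct geo) + g geo)) 0 0
    < - ((nud (t + s.+1) i)^T *m gi geo i) 0 0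
  <-> (Z s.+1 i *m P *m v) 0 0 < Y t sys th geo lam nud s.+1 i.
  move=> s i; rewrite expand3 (HZ s i v) HP (mulmxA (Z s.+1 i) P v) /Y !mxE.
  by split => H; lra.
split.
  by move=> H s i; apply/key; case: (H s i).
by move=> H s i; split; [exact: hd|apply/key; exact: H].
Qed.

Lemma XU_iff (R : realType) (nx nu nn M N J n l t : nat)
  (sys : dynamics R nx nu nn M) (th : policy R nx nu M)
  (geo : geometry R nx nu M n l J)
  (P : 'M[R]_(N * nx + N * (M * nn), N * D nx nn M))
  (HP : forall v : 'cV[R]_(N * D nx nn M), wn_all v = P *m v)
  (Zb : nat -> 'I_J -> 'rV[R]_(N * nx + N * (M * nn)))
  (HZb : forall (s : 'I_N) (j : 'I_J), is_Zbar t sys th geo s j (Zb s j))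
  (v : 'cV[R]_(N * D nx nn M)) :
  (XU t sys th geo v <->
   forall (s : 'I_N) (j : 'I_J), (Zb s j *m P *m v) 0 0 <= Ybar t sys th geo s j).
Proof.
have key : forall (s : 'I_N) (j : 'I_J),
  (Fx geo j *m x t sys th v s.+1 + Fu geo j *m u t sys th v s) 0 0 <= f geo j
  <-> (Zb s j *m P *m v) 0 0 <= Ybar t sys th geo s j.
  move=> s j; rewrite (HZb s j v) HP /Ybar mulmxA !mxE.
  set a := \sum_j _; set b := \sum_j _; set c := \sum_j _.
  by split => H; lra.
by split => H s j; apply/key; apply: H.
Qed.

Lemma part1 (R : realType) (nx nu nn M N J n l t : nat)
  (HN : (0 < N)%N) (HM : (0 < M)%N) (HJ : (0 < J)%N)
  (sys : dynamics R nx nu nn M) (th : policy R nx nu M)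
  (geo : geometry R nx nu M n l J) (lam nud : nat -> 'I_M -> 'cV[R]_l)
  (P : 'M[R]_(N * nx + N * (M * nn), N * D nx nn M))
  (HP : forall v : 'cV[R]_(N * D nx nn M), wn_all v = P *m v)
  (Z : nat -> 'I_M -> 'rV[R]_(N * nx + N * (M * nn)))
  (HZ : forall (s : 'I_N) (i : 'I_M), is_Z t sys th geo lam s.+1 i (Z s.+1 i))
  (Zb : nat -> 'I_J -> 'rV[R]_(N * nx + N * (M * nn)))
  (HZb : forall (s : 'I_N) (j : 'I_J), is_Zbar t sys th geo s j (Zb s j)) :
  (forall (Gam : 'M[R]_(D nx nn M)) (gam : R),
     Gam \in unitmx -> 0 < gam ->
     let Gamb := kron (1%:M : 'M[R]_N) Gam in
     (forall v : 'cV[R]_(N * D nx nn M), norminf (Gamb *m v) <= gam ->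
        CA t sys th geo lam nud v /\ XU t sys th geo v)
     <->
     (forall (s : 'I_N) (i : 'I_M) (j : 'I_J),
        dual_ok geo lam nud (t + s.+1) i /\
        Y t sys th geo lam nud s.+1 i > gam * norm1 (Z s.+1 i *m P *m invmx Gamb) /\
        Ybar t sys th geo s j - gam * norm1 (Zb s j *m P *m invmx Gamb) >= 0)).
Proof.
move=> Gam gam uG g0 Gamb.
have uGb : Gamb \in unitmx by exact: kron_unit.
pose i0 : 'I_M := Ordinal HM; pose j0 : 'I_J := Ordinal HJ.
split.
- move=> H.
  have hd : forall (s : 'I_N) (i : 'I_M), dual_ok geo lam nud (t + s.+1) i.
    have h0 : norminf (Gamb *m 0) <= gam.
      by rewrite mulmx0; apply: le_norminf => [|j]; rewrite ?mxE ?normr0 ltW.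
    by move=> s i; case: ((H 0 h0).1 s i).
  move=> s i j; split; first exact: hd.
  split.
  + have [d [nd ed]] := norm1_attained (Z s.+1 i *m P *m invmx Gamb) (ltW g0).
    have nv : norminf (Gamb *m (invmx Gamb *m d)) <= gam.
      by rewrite mulmxA mulmxV // mul1mx.
    have := (CA_iff HP HZ (invmx Gamb *m d) hd).1 (H _ nv).1 s i.
    by rewrite (mulmxA (Z s.+1 i *m P) (invmx Gamb) d) ed.
  + have [d [nd ed]] := norm1_attained (Zb s j *m P *m invmx Gamb) (ltW g0).
    have nv : norminf (Gamb *m (invmx Gamb *m d)) <= gam.
      by rewrite mulmxA mulmxV // mul1mx.
    have := (XU_iff HP HZb (invmx Gamb *m d)).1 (H _ nv).2 s j.
    by rewrite (mulmxA (Zb s j *m P) (invmx Gamb) d) ed subr_ge0.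
- move=> H v nv.
  have hd : forall (s : 'I_N) (i : 'I_M), dual_ok geo lam nud (t + s.+1) i.
    by move=> s i; case: (H s i j0).
  split.
  + apply/(CA_iff HP HZ v hd) => s i.
    rewrite -{1}(mulKmx uGb v) (mulmxA (Z s.+1 i *m P)).
    apply: le_lt_trans (mul_le_norm1 _ nv) _.
    by case: (H s i j0) => _ [].
  + apply/(XU_iff HP HZb v) => s j.
    rewrite -{1}(mulKmx uGb v) (mulmxA (Zb s j *m P)).
    apply: le_trans (mul_le_norm1 _ nv) _.
    by case: (H s i0 j) => _ [] _; rewrite subr_ge0.
Qed.

Lemma meas_le d (Om : measurableType d) (R : realType) (f : Om -> R) (r : R) :
  measurable_fun setT f -> measurable [set w | f w <= r].
Proof.
move=> mf; have := mf measurableT _ (measurable_itv `]-oo, r]).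
rewrite setTI; congr measurable; apply/seteqP; split => w /=; by rewrite in_itv.
Qed.

Lemma meas_lt d (Om : measurableType d) (R : realType) (f : Om -> R) (r : R) :
  measurable_fun setT f -> measurable [set w | f w < r].
Proof.
move=> mf; have := mf measurableT _ (measurable_itv `]-oo, r[).
rewrite setTI; congr measurable; apply/seteqP; split => w /=; by rewrite in_itv.
Qed.

Lemma meas_ge d (Om : measurableType d) (R : realType) (f : Om -> R) (r : R) :
  measurable_fun setT f -> measurable [set w | r <= f w].
Proof.
move=> mf; have := mf measurableT _ (measurable_itv `[r, +oo[).
rewrite setTI; congr measurable; apply/seteqP; split => w /=; by rewrite in_itv /= andbT.
Qed.

Lemma meas_gt d (Om : measurableType d) (R : realType) (f : Om -> R) (r : R) :
  measurable_fun setT f -> measurable [set w | r < f w].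
Proof.
move=> mf; have := mf measurableT _ (measurable_itv `]r, +oo[).
rewrite setTI; congr measurable; apply/seteqP; split => w /=; by rewrite in_itv /= andbT.
Qed.

Lemma bigU_mem (T : Type) (I : eqType) (B : I -> set T) (s : seq I) (w : T) :
  (\big[setU/set0]_(k <- s) B k) w <-> exists k, k \in s /\ B k w.
Proof.
elim: s => [|k s IH]; first by rewrite big_nil; split => [[]|[k [+ _]]]; rewrite in_nil.
rewrite big_cons; split.
  case=> [h|/IH [k' [h1 h2]]]; first by exists k; rewrite mem_head.
  by exists k'; rewrite in_cons h1 orbT.
move=> [k' []]; rewrite in_cons => /orP [/eqP ->|h1] h2; first by left.
by right; apply/IH; exists k'.
Qed.

Lemma union_bound d (Om : measurableType d) (R : realType) (Pr : probability Om R)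
  (I : finType) (B : I -> set Om) (p : I -> R) :
  (forall k, measurable (B k)) -> (forall k, (Pr (B k) <= (p k)%:E)%E) ->
  ((1 - \sum_k p k)%:E <= Pr [set w | forall k, ~ B k w])%E.
Proof.
move=> mB hB.
pose U := \big[setU/set0]_(k <- index_enum I) B k.
have mU : measurable U by apply: bigsetU_measurable.
have hU : (Pr U <= (\sum_(k <- index_enum I) p k)%:E)%E.
  rewrite /U; elim: (index_enum I) => [|k s IH]; first by rewrite !big_nil measure0.
  rewrite !big_cons; apply: (le_trans (measureU2 Pr _ _)) => //.
    by apply: bigsetU_measurable.
  by rewrite EFinD; exact: leeD (hB k) IH.
have -> : [set w | forall k, ~ B k w] = ~` U.
  apply/seteqP; split => w /=.
    by move=> h /bigU_mem [k [_ hk]]; exact: (h k).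
  by move=> h k hk; apply: h; apply/bigU_mem; exists k; by rewrite mem_index_enum.
rewrite probability_setC // -(fineK (fin_num_measure Pr _ mU)).
rewrite -(fineK (fin_num_measure Pr _ mU)) in hU.
rewrite lee_fin in hU; rewrite -EFinB lee_fin.
by rewrite lerD2l lerN2.
Qed.

Lemma pr_fin d (Om : measurableType d) (R : realType) (Pr : probability Om R) (A : set Om) :
  measurable A -> Pr A = (fine (Pr A))%:E.
Proof. by move=> mA; rewrite fineK // (fin_num_measure Pr _ mA). Qed.

Lemma bad_lt d (Om : measurableType d) (R : realType) (Pr : probability Om R)
  (f : Om -> R) (y z q : R) : measurable_fun setT f -> z < y ->
  ((1 - q)%:E <= Pr [set w | (f w <= z)%R])%E -> (Pr [set w | (y <= f w)%R] <= q%:E)%E.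
Proof.
move=> mf zy h.
have -> : [set w | y <= f w] = ~` [set w | f w < y].
  apply/seteqP; split => w /= hw; first by rewrite ltNge hw.
  by move/negP: hw; rewrite ltNge negbK.
rewrite probability_setC; last exact: meas_lt.
have sub : (Pr [set w | (f w <= z)%R] <= Pr [set w | (f w < y)%R])%E.
  apply: le_measure; rewrite ?inE; [exact: meas_le|exact: meas_lt|].
  by move=> w /= h'; apply: le_lt_trans zy.
move: h sub; rewrite (pr_fin Pr (meas_le z mf)) (pr_fin Pr (meas_lt y mf)).
rewrite -EFinB !lee_fin => h1 h2; lra.
Qed.

Lemma bad_le d (Om : measurableType d) (R : realType) (Pr : probability Om R)
  (f : Om -> R) (y z q : R) : measurable_fun setT f -> z <= y ->
  ((1 - q)%:E <= Pr [set w | (f w <= z)%R])%E -> (Pr [set w | (y < f w)%R] <= q%:E)%E.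
Proof.
move=> mf zy h.
have -> : [set w | y < f w] = ~` [set w | f w <= y].
  apply/seteqP; split => w /= hw; first by rewrite leNgt hw.
  by move/negP: hw; rewrite leNgt negbK.
rewrite probability_setC; last exact: meas_le.
have sub : (Pr [set w | (f w <= z)%R] <= Pr [set w | (f w <= y)%R])%E.
  apply: le_measure; rewrite ?inE; [exact: meas_le|exact: meas_le|].
  by move=> w /= h'; apply: le_trans zy.
move: h sub; rewrite (pr_fin Pr (meas_le z mf)) (pr_fin Pr (meas_le y mf)).
rewrite -EFinB !lee_fin => h1 h2; lra.
Qed.

Lemma gauss_ge (R : realType) (sig gam q : R) : 0 <= sig -> 0 <= q ->
  Phi gam = 1 - q -> 1 - q <= gauss_cdf sig (gam * sig).
Proof.
move=> s0 q0 hP; rewrite /gauss_cdf; case: ifPn => hs.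
  by rewrite mulfK ?hP // gt_eqF.
have -> : sig = 0 by apply/eqP; rewrite eq_le s0 andbT leNgt.
by rewrite mulr0 lexx; lra.
Qed.

Lemma sigmaE (R : realType) m (a : 'rV[R]_m) (S12 Sb : 'M[R]_m) :
  S12^T = S12 -> S12 *m S12 = Sb ->
  Num.sqrt ((a *m Sb *m a^T) 0 0) = norm2 (a *m S12).
Proof.
by move=> hs hss; rewrite norm2E trmx_mul hs mulmxA -(mulmxA a S12 S12) hss.
Qed.

Lemma sigma2E (R : realType) m (a : 'rV[R]_m) (S12 Sb : 'M[R]_m) :
  S12^T = S12 -> S12 *m S12 = Sb ->
  (a *m Sb *m a^T) 0 0 = norm2 (a *m S12) ^+ 2.
Proof.
move=> hs hss; rewrite -(sigmaE _ hs hss) sqr_sqrtr //.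
have -> : a *m Sb *m a^T = (a *m S12) *m (a *m S12)^T.
  by rewrite trmx_mul hs mulmxA -(mulmxA a S12 S12) hss.
set r := a *m S12.
rewrite mxE sumr_ge0 // => j _.
by rewrite [r^T j 0]mxE -expr2 sqr_ge0.
Qed.

Lemma cantelli' d (Om : measurableType d) (R : realType) (Pr : probability Om R)
  (f : Om -> R) (s2 lam : R) :
  measurable_fun setT f ->
  Pr.-integrable setT (fun w => (f w)%:E) ->
  Pr.-integrable setT (fun w => (f w ^+ 2)%:E) ->
  (\int[Pr]_w (f w)%:E = 0)%E ->
  (\int[Pr]_w (f w ^+ 2)%:E = s2%:E)%E ->
  0 < lam ->
  (Pr [set w | (lam <= f w)%R] <= (s2 / (s2 + lam ^+ 2))%:E)%E.
Proof.
move=> mf i1 i2 e1 e2 l0.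
have s20 : 0 <= s2.
  by rewrite -lee_fin -e2; apply: integral_ge0 => w _; rewrite lee_fin sqr_ge0.
pose u := s2 / lam.
have u0 : 0 <= u by rewrite divr_ge0 // ltW.
pose g := fun w => ((f w + u) ^+ 2)%:E.
have mh : measurable_fun setT (fun w => (f w + u) ^+ 2).
  by apply: measurable_funX; apply: measurable_funD => //.
have mg : measurable_fun setT g by apply/measurable_EFinP.
have ic : Pr.-integrable setT (fun w => (u ^+ 2)%:E).
  exact: (finite_measure_integrable_cst Pr (u ^+ 2) measurableT).
have iZ : Pr.-integrable setT (fun w => ((2 * u)%:E * (f w)%:E)%E).
  exact: (integrableZl measurableT (2 * u) i1).
have eg : (\int[Pr]_w g w = (s2 + u ^+ 2)%:E)%E.
  rewrite (eq_integral (fun w => ((f w ^+ 2)%:E + (2 * u)%:E * (f w)%:E) + (u ^+ 2)%:E)%E); last first.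
    by move=> w _; rewrite /g -!EFinM -!EFinD; congr EFin; ring.
  rewrite integralD //; last exact: integrableD.
  rewrite integralD // integralZl // e1 e2.
  rewrite (_ : (fun w => (u ^+ 2)%:E) = cst (u ^+ 2)%:E) // integral_cst //= probability_setT.
  by rewrite mule0 adde0 mule1 -EFinD.
have apos : 0 < (lam + u) ^+ 2 by rewrite exprn_gt0 // ltr_wpDr.
have := le_integral_abse Pr measurableT mg apos.
rewrite (eq_integral g); last by move=> w _; rewrite gee0_abs // lee_fin sqr_ge0.
rewrite eg.
have -> : setT `&` [set x | (((lam + u) ^+ 2)%:E <= `|g x|)%E] =
          [set w | ((lam + u) ^+ 2 <= (f w + u) ^+ 2)%R].
  apply/seteqP; split => w /=.
    by case=> _; rewrite lee_fin ger0_norm ?sqr_ge0.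
  by move=> h; split => //; rewrite lee_fin ger0_norm ?sqr_ge0.
move=> hM.
have sub : (Pr [set w | (lam <= f w)%R] <= Pr [set w | ((lam + u) ^+ 2 <= (f w + u) ^+ 2)%R])%E.
  apply: le_measure; rewrite ?inE; [exact: meas_ge|exact: meas_ge|].
  move=> w /= h; apply: lerXn2r.
  - by rewrite nnegrE addr_ge0 // ltW.
  - by rewrite nnegrE addr_ge0 // (le_trans (ltW l0)).
  - by rewrite lerD2r.
have mB : measurable [set w | ((lam + u) ^+ 2 <= (f w + u) ^+ 2)%R] := meas_ge _ mh.
have h1 : (lam + u) ^+ 2 * fine (Pr [set w | ((lam + u) ^+ 2 <= (f w + u) ^+ 2)%R]) <= s2 + u ^+ 2.
  by rewrite -lee_fin EFinM -(pr_fin Pr mB); exact: hM.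
move: sub; rewrite (pr_fin Pr mB) (pr_fin Pr (meas_ge lam mf)) !lee_fin => h2.
have eq : s2 / (s2 + lam ^+ 2) = (s2 + u ^+ 2) / (lam + u) ^+ 2.
  rewrite /u; field.
  have h3 : 0 < lam * lam + s2 by nra.
  by rewrite !gt_eqF.
rewrite eq; apply: le_trans h2 _.
by rewrite ler_pdivlMr // mulrC.
Qed.

Lemma degen d (Om : measurableType d) (R : realType) (Pr : probability Om R)
  (f : Om -> R) :
  measurable_fun setT f ->
  Pr.-integrable setT (fun w => (f w)%:E) ->
  Pr.-integrable setT (fun w => (f w ^+ 2)%:E) ->
  (\int[Pr]_w (f w)%:E = 0)%E ->
  (\int[Pr]_w (f w ^+ 2)%:E = 0%:E)%E ->
  Pr [set w | (0 < f w)%R] = 0%E.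
Proof.
move=> mf i1 i2 e1 e2.
have hn : forall n : nat, Pr [set w | ((n.+1%:R)^-1 <= f w)%R] = 0%E.
  move=> n; apply/eqP; rewrite -measure_le0.
  apply: le_trans (cantelli' mf i1 i2 e1 e2 _) _; first by rewrite invr_gt0.
  by rewrite mul0r.
have hN : Pr.-negligible (\bigcup_n [set w | ((n.+1%:R)^-1 <= f w)%R]).
  apply: negligible_bigcup => n; apply/negligibleP; [exact: meas_ge|exact: hn].
have sub : [set w | (0 < f w)%R] `<=` \bigcup_n [set w | ((n.+1%:R)^-1 <= f w)%R].
  move=> w /= h; have [k hk] := ltr_add_invr h.
  by exists k => //=; rewrite add0r in hk; exact: ltW.
by apply/negligibleP; [exact: meas_gt|exact: negligibleS hN].
Qed.

Lemma E_int d (Om : measurableType d) (R : realType) (Pr : probability Om R) (f : Om -> R) :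
  ('E_Pr[f] = \int[Pr]_w (f w)%:E)%E.
Proof. by rewrite unlock. Qed.

Lemma int_sum d (Om : measurableType d) (R : realType) (Pr : probability Om R)
  (I : finType) (F : I -> Om -> R) :
  (forall i, Pr.-integrable setT (fun w => (F i w)%:E)) ->
  Pr.-integrable setT (fun w => (\sum_i F i w)%:E) /\
  (\int[Pr]_w (\sum_i F i w)%:E = \sum_i \int[Pr]_w (F i w)%:E)%E.
Proof.
move=> hi; split.
  under eq_fun do rewrite -sumEFin.
  by apply: integrable_sum => //.
under eq_integral do rewrite -sumEFin.
by rewrite integral_sum.
Qed.

Lemma int_scale d (Om : measurableType d) (R : realType) (Pr : probability Om R)
  (c : R) (f : Om -> R) :
  Pr.-integrable setT (fun w => (f w)%:E) ->
  Pr.-integrable setT (fun w => (c * f w)%:E) /\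
  (\int[Pr]_w (c * f w)%:E = c%:E * \int[Pr]_w (f w)%:E)%E.
Proof.
move=> hi; split.
  under eq_fun do rewrite EFinM.
  exact: integrableZl.
under eq_integral do rewrite EFinM.
by rewrite integralZl.
Qed.

Lemma moments d (Om : measurableType d) (R : realType) (Pr : probability Om R) (m : nat)
  (V : Om -> 'cV[R]_m) (Sb : 'M[R]_m) (a : 'rV[R]_m) :
  (forall r, measurable_fun setT (fun w => V w r ord0)) ->
  (forall r, Pr.-integrable setT (fun w => (V w r ord0)%:E)) ->
  (forall r, ('E_Pr[fun w => V w r ord0] = 0)%E) ->
  (forall r r', Pr.-integrable setT (fun w => ((V w r ord0 * V w r' ord0)%R)%:E)) ->
  (forall r r', ('E_Pr[fun w => (V w r ord0 * V w r' ord0)%R] = (Sb r r')%:E)%E) ->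
  measurable_fun setT (fun w => (a *m V w) 0 0) /\
  Pr.-integrable setT (fun w => ((a *m V w) 0 0)%:E) /\
  Pr.-integrable setT (fun w => (((a *m V w) 0 0) ^+ 2)%:E) /\
  (\int[Pr]_w ((a *m V w) 0 0)%:E = 0)%E /\
  (\int[Pr]_w (((a *m V w) 0 0) ^+ 2)%:E = ((a *m Sb *m a^T) 0 0)%:E)%E.
Proof.
move=> mV iV EV iVV EVV.
have eX w : (a *m V w) 0 0 = \sum_j a 0 j * V w j ord0.
  by rewrite mxE.
have eX2 w : ((a *m V w) 0 0) ^+ 2 =
    \sum_j \sum_k (a 0 j * a 0 k) * (V w j ord0 * V w k ord0).
  rewrite mxE expr2 big_distrl; apply: eq_bigr => j _.
  rewrite big_distrr; apply: eq_bigr => k _ /=; ring.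
have iS j : Pr.-integrable setT (fun w => (a 0 j * V w j ord0)%:E).
  by case: (int_scale (a 0 j) (iV j)).
have iSS j : Pr.-integrable setT
    (fun w => (\sum_k (a 0 j * a 0 k) * (V w j ord0 * V w k ord0))%:E).
  exact: (proj1 (@int_sum _ _ _ Pr _ (fun k w => (a 0 j * a 0 k) * (V w j ord0 * V w k ord0))
     (fun k => proj1 (int_scale (a 0 j * a 0 k) (iVV j k))))).
have [i1 e1] := int_sum (F := fun j w => a 0 j * V w j ord0) iS.
have [i2 e2] := int_sum (F := fun j w => \sum_k (a 0 j * a 0 k) * (V w j ord0 * V w k ord0)) iSS.
split.
  apply: (@eq_measurable_fun _ _ _ _ _ (fun w => \sum_j a 0 j * V w j ord0)).
    by move=> w _; rewrite eX.
  apply: measurable_sum => j.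
  by apply: measurable_funM => //.
split.
  by move: i1; apply: eq_integrable => // w _; rewrite eX.
split.
  by move: i2; apply: eq_integrable => // w _; rewrite eX2.
rewrite (eq_integral (fun w => (\sum_j a 0 j * V w j ord0)%:E)); last by move=> w _; rewrite eX.
rewrite [X in _ /\ X = _](eq_integral (fun w => (\sum_j \sum_k (a 0 j * a 0 k) * (V w j ord0 * V w k ord0))%:E)); last by move=> w _; rewrite eX2.
split.
  rewrite e1 big1 // => j _.
  by case: (int_scale (a 0 j) (iV j)) => _ ->; rewrite -E_int EV mule0.
rewrite e2 (_ : (a *m Sb *m a^T) 0 0 = \sum_j \sum_k (a 0 j * a 0 k) * Sb j k); last first.
  rewrite mxE (exchange_big) /=; apply: eq_bigr => j _; rewrite mxE big_distrl /=.
  by apply: eq_bigr => k _; rewrite !mxE /=; ring.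
rewrite -sumEFin; apply: eq_bigr => j _.
have [_ ->] := @int_sum _ _ _ Pr _ (fun k w => (a 0 j * a 0 k) * (V w j ord0 * V w k ord0))
   (fun k => proj1 (int_scale (a 0 j * a 0 k) (iVV j k))).
rewrite -sumEFin; apply: eq_bigr => k _.
by case: (int_scale (a 0 j * a 0 k) (iVV j k)) => _ ->; rewrite -E_int EVV -EFinM.
Qed.

Lemma Xmeas d (Om : measurableType d) (R : realType) (m : nat)
  (V : Om -> 'cV[R]_m) (a : 'rV[R]_m) :
  (forall r, measurable_fun setT (fun w => V w r ord0)) ->
  measurable_fun setT (fun w => (a *m V w) 0 0).
Proof.
move=> mV.
apply: (@eq_measurable_fun _ _ _ _ _ (fun w => \sum_j a 0 j * V w j ord0)).
  by move=> w _; rewrite mxE.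
apply: measurable_sum => j.
by apply: measurable_funM => //.
Qed.

Lemma real_thr (R : realType) (K eps s2 g Y sig : R) :
  0 < eps -> eps < K -> g = Num.sqrt ((K - eps) / eps) -> 0 <= sig ->
  s2 = sig ^+ 2 -> g * sig <= Y -> 0 < Y -> s2 / (s2 + Y ^+ 2) <= eps / K.
Proof.
move=> e0 eK hg s0 hs gY Y0.
have c0 : 0 <= (K - eps) / eps by rewrite divr_ge0 // ?subr_ge0 ltW.
have hg2 : g ^+ 2 = (K - eps) / eps by rewrite hg sqr_sqrtr.
have g0 : 0 <= g by rewrite hg sqrtr_ge0.
have h : (g * sig) ^+ 2 <= Y ^+ 2.
  by apply: lerXn2r => //; rewrite nnegrE ?mulr_ge0 // ltW.
rewrite exprMn hg2 -hs in h.
have hc : (K - eps) / eps * eps = K - eps by rewrite mulfVK // gt_eqF.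
have K0 : 0 < K by apply: lt_trans eK.
have s20 : 0 <= s2 by rewrite hs sqr_ge0.
rewrite ler_pdivrMr; last by rewrite ltr_wpDl // exprn_gt0.
rewrite mulrAC ler_pdivlMr //.
set c := (K - eps) / eps in hc h.
nra.
Qed.

Lemma p3_ca d (Om : measurableType d) (R : realType) (Pr : probability Om R)
  (f : Om -> R) (K eps g Y sig : R) :
  measurable_fun setT f ->
  Pr.-integrable setT (fun w => (f w)%:E) ->
  Pr.-integrable setT (fun w => (f w ^+ 2)%:E) ->
  (\int[Pr]_w (f w)%:E = 0)%E ->
  (\int[Pr]_w (f w ^+ 2)%:E = (sig ^+ 2)%:E)%E ->
  0 < eps -> eps < K -> g = Num.sqrt ((K - eps) / eps) -> 0 <= sig ->
  g * sig < Y ->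
  (Pr [set w | (Y <= f w)%R] <= (eps / K)%:E)%E.
Proof.
move=> mf i1 i2 e1 e2 e0 eK hg s0 gY.
have Y0 : 0 < Y by apply: le_lt_trans gY; rewrite mulr_ge0 // hg sqrtr_ge0.
apply: le_trans (cantelli' mf i1 i2 e1 e2 Y0) _.
by rewrite lee_fin; apply: (real_thr e0 eK hg s0 erefl (ltW gY) Y0).
Qed.

Lemma p3_xu d (Om : measurableType d) (R : realType) (Pr : probability Om R)
  (f : Om -> R) (K eps g Y sig : R) :
  measurable_fun setT f ->
  Pr.-integrable setT (fun w => (f w)%:E) ->
  Pr.-integrable setT (fun w => (f w ^+ 2)%:E) ->
  (\int[Pr]_w (f w)%:E = 0)%E ->
  (\int[Pr]_w (f w ^+ 2)%:E = (sig ^+ 2)%:E)%E ->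
  0 < eps -> eps < K -> g = Num.sqrt ((K - eps) / eps) -> 0 <= sig ->
  g * sig <= Y ->
  (Pr [set w | (Y < f w)%R] <= (eps / K)%:E)%E.
Proof.
move=> mf i1 i2 e1 e2 e0 eK hg s0 gY.
have g0 : 0 < g by rewrite hg sqrtr_gt0 divr_gt0 // subr_gt0.
have [Y0|Y0] := ltP 0 Y.
  have sub : (Pr [set w | (Y < f w)%R] <= Pr [set w | (Y <= f w)%R])%E.
    apply: le_measure; rewrite ?inE; [exact: meas_gt|exact: meas_ge|].
    by move=> w /= h; exact: ltW.
  apply: le_trans sub _; apply: le_trans (cantelli' mf i1 i2 e1 e2 Y0) _.
  by rewrite lee_fin; apply: (real_thr e0 eK hg s0 erefl gY Y0).
have gs0 : 0 <= g * sig by rewrite mulr_ge0 // ltW.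
have hs : sig = 0.
  apply/eqP; rewrite eq_le s0 andbT.
  by rewrite -(pmulr_rle0 _ g0); apply: le_trans gY Y0.
have -> : Y = 0 by apply/eqP; rewrite eq_le Y0 /=; apply: le_trans gY; rewrite hs mulr0.
rewrite hs expr0n /= in e2.
by rewrite (degen mf i1 i2 e1 e2) lee_fin divr_ge0 // ltW // (lt_trans e0 eK).
Qed.

Lemma final_bound (R : realType) (nx nu nn M N J n l t : nat)
  (HN : (0 < N)%N) (HM : (0 < M)%N) (HJ : (0 < J)%N)
  (sys : dynamics R nx nu nn M) (th : policy R nx nu M)
  (geo : geometry R nx nu M n l J) (lam nud : nat -> 'I_M -> 'cV[R]_l)
  (P : 'M[R]_(N * nx + N * (M * nn), N * D nx nn M))
  (HP : forall v : 'cV[R]_(N * D nx nn M), wn_all v = P *m v)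
  (Z : nat -> 'I_M -> 'rV[R]_(N * nx + N * (M * nn)))
  (HZ : forall (s : 'I_N) (i : 'I_M), is_Z t sys th geo lam s.+1 i (Z s.+1 i))
  (Zb : nat -> 'I_J -> 'rV[R]_(N * nx + N * (M * nn)))
  (HZb : forall (s : 'I_N) (j : 'I_J), is_Zbar t sys th geo s j (Zb s j))
  (d : measure_display) (Om : measurableType d) (Pr : probability Om R)
  (V : Om -> 'cV[R]_(N * D nx nn M)) (eps : R) :
  (forall r, measurable_fun setT (fun w => V w r ord0)) -> 0 < eps ->
  (forall (s : 'I_N) (i : 'I_M), dual_ok geo lam nud (t + s.+1) i) ->
  (forall (s : 'I_N) (i : 'I_M),
     (Pr [set w | (Y t sys th geo lam nud s.+1 i <= (Z s.+1 i *m P *m V w) 0 0)%R]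
       <= (eps / (2 * N * M)%:R)%:E)%E) ->
  (forall (s : 'I_N) (j : 'I_J),
     (Pr [set w | (Ybar t sys th geo s j < (Zb s j *m P *m V w) 0 0)%R]
       <= (eps / (2 * N * J)%:R)%:E)%E) ->
  ((1 - eps)%:E <= Pr [set w | CA t sys th geo lam nud (V w) /\ XU t sys th geo (V w)])%E.
Proof.
move=> mV e0 hd hca hxu.
pose B (k : ('I_N * 'I_M) + ('I_N * 'I_J)) : set Om :=
  match k with
  | inl p => [set w | (Y t sys th geo lam nud p.1.+1 p.2 <= (Z p.1.+1 p.2 *m P *m V w) 0 0)%R]
  | inr p => [set w | (Ybar t sys th geo p.1 p.2 < (Zb p.1 p.2 *m P *m V w) 0 0)%R]
  end.
pose p (k : ('I_N * 'I_M) + ('I_N * 'I_J)) : R :=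
  match k with
  | inl _ => eps / (2 * N * M)%:R
  | inr _ => eps / (2 * N * J)%:R
  end.
have mB k : measurable (B k).
  by case: k => -[s i]; [apply: meas_ge | apply: meas_gt]; apply: Xmeas.
have hB k : (Pr (B k) <= (p k)%:E)%E.
  by case: k => -[s i]; [apply: hca|apply: hxu].
have := union_bound mB hB.
have -> : \sum_k p k = eps.
  rewrite big_sumType /= !sumr_const !card_prod !card_ord.
  have hN : (N%:R : R) != 0 by rewrite pnatr_eq0 -lt0n.
  have hM' : (M%:R : R) != 0 by rewrite pnatr_eq0 -lt0n.
  have hJ' : (J%:R : R) != 0 by rewrite pnatr_eq0 -lt0n.
  have h1 : (eps / (2 * N * M)%:R) *+ (N * M) = eps / 2.
    rewrite -mulr_natr (natrM _ (2 * N) M) (natrM _ 2 N) (natrM _ N M).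
    by field; rewrite hN hM'.
  have h2 : (eps / (2 * N * J)%:R) *+ (N * J) = eps / 2.
    rewrite -mulr_natr (natrM _ (2 * N) J) (natrM _ 2 N) (natrM _ N J).
    by field; rewrite hN hJ'.
  by rewrite h1 h2; field.
have -> : [set w | forall k, ~ B k w] =
          [set w | CA t sys th geo lam nud (V w) /\ XU t sys th geo (V w)] => //.
apply/seteqP; split => w /=.
- move=> h; split.
    apply/(CA_iff HP HZ (V w) hd) => s i; rewrite ltNge; apply/negP => h'.
    exact: (h (inl (s, i))) h'.
  apply/(XU_iff HP HZb (V w)) => s j; rewrite leNgt; apply/negP => h'.
  exact: (h (inr (s, j))) h'.
- move=> [hC hX] [[s i]|[s j]].
    by have := (CA_iff HP HZ (V w) hd).1 hC s i; rewrite ltNge => /negP.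
  by have := (XU_iff HP HZb (V w)).1 hX s j; rewrite leNgt => /negP.
Qed.
Unset Implicit Arguments.

Theorem theorem1
  (R : realType) (nx nu nn M N J n l t : nat)
  (HN : (0 < N)%N) (HM : (0 < M)%N) (HJ : (0 < J)%N)
  (sys : dynamics R nx nu nn M) (th : policy R nx nu M)
  (geo : geometry R nx nu M n l J) (lam nud : nat -> 'I_M -> 'cV[R]_l)
  (HK : proper_cone (K geo))
  (HR : forall k, rotation (Rk geo k))
  (HRi : forall k i, rotation (Rik geo k i))
  (P : 'M[R]_(N * nx + N * (M * nn), N * D nx nn M))
  (HP : forall v : 'cV[R]_(N * D nx nn M), wn_all v = P *m v)
  (Z : nat -> 'I_M -> 'rV[R]_(N * nx + N * (M * nn)))
  (HZ : forall (s : 'I_N) (i : 'I_M), is_Z t sys th geo lam s.+1 i (Z s.+1 i))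
  (Zb : nat -> 'I_J -> 'rV[R]_(N * nx + N * (M * nn)))
  (HZb : forall (s : 'I_N) (j : 'I_J), is_Zbar t sys th geo s j (Zb s j)) :
  (* 1) robust (box-bounded) noise *)
  (forall (Gam : 'M[R]_(D nx nn M)) (gam : R),
     Gam \in unitmx -> 0 < gam ->
     let Gamb := kron (1%:M : 'M[R]_N) Gam in
     (forall v : 'cV[R]_(N * D nx nn M), norminf (Gamb *m v) <= gam ->
        CA t sys th geo lam nud v /\ XU t sys th geo v)
     <->
     (forall (s : 'I_N) (i : 'I_M) (j : 'I_J),
        dual_ok geo lam nud (t + s.+1) i /\
        Y t sys th geo lam nud s.+1 i > gam * norm1 (Z s.+1 i *m P *m invmx Gamb) /\
        Ybar t sys th geo s j - gam * norm1 (Zb s j *m P *m invmx Gamb) >= 0))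
  /\
  (* 2) Gaussian noise *)
  (forall (Sig : 'M[R]_(D nx nn M)) (S12 : 'M[R]_(N * D nx nn M)) (eps gca gxu : R)
          (d : measure_display) (Om : measurableType d) (Pr : probability Om R)
          (V : Om -> 'cV[R]_(N * D nx nn M)),
     sym_psd Sig -> sym_psd S12 -> S12 *m S12 = kron (1%:M : 'M[R]_N) Sig ->
     0 < eps < 1 ->
     Phi gca = 1 - eps / (2 * N * M)%:R ->
     Phi gxu = 1 - eps / (2 * N * J)%:R ->
     (forall r, measurable_fun setT (fun w => V w r ord0)) ->
     (forall (a : 'rV[R]_(N * D nx nn M)) (r : R),
        Pr [set w | (a *m V w) 0 0 <= r] =
        (gauss_cdf (Num.sqrt ((a *m kron (1%:M : 'M[R]_N) Sig *m a^T) 0 0)) r)%:E) ->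
     (forall (s : 'I_N) (i : 'I_M) (j : 'I_J),
        dual_ok geo lam nud (t + s.+1) i /\
        Y t sys th geo lam nud s.+1 i > gca * norm2 (Z s.+1 i *m P *m S12) /\
        Ybar t sys th geo s j >= gxu * norm2 (Zb s j *m P *m S12)) ->
     ((1 - eps)%:E <= Pr [set w | CA t sys th geo lam nud (V w) /\ XU t sys th geo (V w)])%E)
  /\
  (* 3) distributionally robust: any zero-mean law with covariance Sigma *)
  (forall (Sig : 'M[R]_(D nx nn M)) (S12 : 'M[R]_(N * D nx nn M)) (eps : R)
          (d : measure_display) (Om : measurableType d) (Pr : probability Om R)
          (V : Om -> 'cV[R]_(N * D nx nn M)),
     sym_psd Sig -> sym_psd S12 -> S12 *m S12 = kron (1%:M : 'M[R]_N) Sig ->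
     0 < eps < 1 ->
     let gca := Num.sqrt (((2 * N * M)%:R - eps) / eps) in
     let gxu := Num.sqrt (((2 * N * J)%:R - eps) / eps) in
     (forall r, measurable_fun setT (fun w => V w r ord0)) ->
     (forall r, Pr.-integrable setT (fun w => (V w r ord0)%:E)) ->
     (forall r, ('E_Pr[fun w => V w r ord0] = 0)%E) ->
     (forall r r', Pr.-integrable setT (fun w => ((V w r ord0 * V w r' ord0)%R)%:E)) ->
     (forall r r', ('E_Pr[fun w => (V w r ord0 * V w r' ord0)%R] =
                      (kron (1%:M : 'M[R]_N) Sig r r')%:E)%E) ->
     (forall (s : 'I_N) (i : 'I_M) (j : 'I_J),
        dual_ok geo lam nud (t + s.+1) i /\
        Y t sys th geo lam nud s.+1 i > gca * norm2 (Z s.+1 i *m P *m S12) /\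
        Ybar t sys th geo s j >= gxu * norm2 (Zb s j *m P *m S12)) ->
     ((1 - eps)%:E <= Pr [set w | CA t sys th geo lam nud (V w) /\ XU t sys th geo (V w)])%E).
Proof.
have epsK : forall (eps : R) (K : nat), 0 < eps < 1 -> (0 < K)%N -> eps < (2 * K)%:R.
  move=> eps K /andP [_ e1] hK; apply: lt_le_trans e1 _.
  by rewrite ler1n muln_gt0 hK.
pose i0 : 'I_M := Ordinal HM; pose j0 : 'I_J := Ordinal HJ.
split; first exact: (@part1 R nx nu nn M N J n l t HN HM HJ sys th geo lam nud P HP Z HZ Zb HZb).
split.
- move=> Sig S12 eps gca gxu d Om Pr V [HS1 _] [HS2 _] HSS he hgca hgxu mV HG H.
  have e0 : 0 < eps by case/andP: he.
  have hd : forall (s : 'I_N) (i : 'I_M), dual_ok geo lam nud (t + s.+1) i.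
    by move=> s i; case: (H s i j0).
  apply: (@final_bound R nx nu nn M N J n l t HN HM HJ sys th geo lam nud P HP Z HZ Zb HZb d Om Pr V eps mV e0 hd).
  + move=> s i; have [_ [hY _]] := H s i j0.
    apply: (bad_lt (Xmeas (Z s.+1 i *m P) mV) hY).
    rewrite HG (sigmaE _ HS2 HSS) lee_fin; apply: gauss_ge => //.
      by rewrite /norm2 sqrtr_ge0.
    by rewrite divr_ge0 // ltW.
  + move=> s j; have [_ [_ hY]] := H s i0 j.
    apply: (bad_le (Xmeas (Zb s j *m P) mV) hY).
    rewrite HG (sigmaE _ HS2 HSS) lee_fin; apply: gauss_ge => //.
      by rewrite /norm2 sqrtr_ge0.
    by rewrite divr_ge0 // ltW.
- move=> Sig S12 eps d Om Pr V [HS1 _] [HS2 _] HSS he gca gxu mV iV EV iVV EVV H.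
  have e0 : 0 < eps by case/andP: he.
  have hd : forall (s : 'I_N) (i : 'I_M), dual_ok geo lam nud (t + s.+1) i.
    by move=> s i; case: (H s i j0).
  apply: (@final_bound R nx nu nn M N J n l t HN HM HJ sys th geo lam nud P HP Z HZ Zb HZb d Om Pr V eps mV e0 hd).
  + move=> s i; have [_ [hY _]] := H s i j0.
    have [mX [iX [iX2 [eX1 eX2]]]] := moments (Z s.+1 i *m P) mV iV EV iVV EVV.
    rewrite (sigma2E _ HS2 HSS) in eX2.
    apply: (p3_ca mX iX iX2 eX1 eX2 e0 _ erefl _ hY).
      by rewrite -mulnA; apply: epsK => //; rewrite muln_gt0 HN HM.
    by rewrite /norm2 sqrtr_ge0.
  + move=> s j; have [_ [_ hY]] := H s i0 j.
    have [mX [iX [iX2 [eX1 eX2]]]] := moments (Zb s j *m P) mV iV EV iVV EVV.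
    rewrite (sigma2E _ HS2 HSS) in eX2.
    apply: (p3_xu mX iX iX2 eX1 eX2 e0 _ erefl _ hY).
      by rewrite -mulnA; apply: epsK => //; rewrite muln_gt0 HN HJ.
    by rewrite /norm2 sqrtr_ge0.
Qed.
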